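(* Let $R$ be a proper normed division ring and let $M$ be a Polish $R$-module with $\dim_R(M)$ uncountable. Then there is a nonempty perfect subset of $M$ which is linearly independent over $R$.
   Context: A norm on a ring $R$ is a function $|\cdot|\colon R\to[0,\infty)$ such that $(a,b)\mapsto|a-b|$ is a metric and $|rs|\le|r||s|$; it is proper if every closed ball is compact; a proper normed ring is a ring with a proper norm, topologized by the metric. A division ring is a ring in which every nonzero element has a two-sided inverse. A Polish $R$-module is a topological left $R$-module whose topology is Polish. *)

(* Defs.v *)
From HB Require Import structures.
From mathcomp Require Import all_boot all_order all_algebra.
From mathcomp Require Import all_classical reals topology.
Set Implicit Arguments. Unset Strict Implicit. Unset Printing Implicit Defensive.
Import Order.TTheory GRing.Theory Num.Theory.
Local Open Scope classical_set_scope.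
Local Open Scope ring_scope.

HB.structure Definition TopBaseAddMagma := {M of Algebra.BaseAddMagma M & Topological M}.
HB.structure Definition TopNmodule := {M of GRing.Nmodule M & Topological M}.
HB.structure Definition TopZmodule := {M of GRing.Zmodule M & Topological M}.

#[short(type="topLmodType")]
HB.structure Definition TopLmodule (K : pzRingType) :=
  {M of GRing.Lmodule K M & Topological M}.

(* A (unital) ring carrying a topology (to be constrained to the norm topology). *)
#[short(type="topUnitRingType")]
HB.structure Definition TopUnitRing := {K of GRing.UnitRing K & Topological K}.

Definition division_ring (K : unitRingType) : Prop :=
  forall x : K, x != 0 -> x \is a GRing.unit.

Definition ring_norm (R : realType) (K : unitRingType) (nrm : K -> R) : Prop :=
  [/\ forall x, 0 <= nrm x,
      forall a b, nrm (a - b) = 0 <-> a = b,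
      forall a b, nrm (a - b) = nrm (b - a),
      forall a b c, nrm (a - c) <= nrm (a - b) + nrm (b - c)
    & forall r s, nrm (r * s) <= nrm r * nrm s].

Definition metric_topology (R : realType) (T : topologicalType)
  (d : T -> T -> R) : Prop :=
  forall (x : T) (A : set T),
    nbhs x A <-> exists2 e : R, 0 < e & [set y | d x y < e] `<=` A.

Definition proper_norm (R : realType) (K : topUnitRingType) (nrm : K -> R) :=
  forall (x : K) (r : R), compact [set y | nrm (x - y) <= r].

Definition proper_normed_division_ring (R : realType) (K : topUnitRingType)
  (nrm : K -> R) : Prop :=
  [/\ division_ring K, ring_norm nrm,
      metric_topology (fun a b : K => nrm (a - b)) & proper_norm nrm].

Definition topological_module (K : topUnitRingType) (M : topLmodType K) : Prop :=
  [/\ continuous (fun p : M * M => p.1 + p.2),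
      continuous (fun x : M => - x)
    & continuous (fun p : K * M => p.1 *: p.2)].

Definition is_metric (R : realType) (T : Type) (d : T -> T -> R) : Prop :=
  [/\ forall x y, 0 <= d x y,
      forall x y, d x y = 0 <-> x = y,
      forall x y, d x y = d y x
    & forall x y z, d x z <= d x y + d y z].

Definition polish_space (R : realType) (T : topologicalType) : Prop :=
  (exists D : set T, countable D /\ closure D = setT) /\
  exists d : T -> T -> R,
    [/\ is_metric d, metric_topology d &
        forall u : nat -> T,
          (forall e : R, 0 < e -> exists N : nat,
              forall m n, (N <= m)%N -> (N <= n)%N -> d (u m) (u n) < e) ->
          exists l : T, u @ \oo --> l].

Definition lin_indep (K : pzRingType) (M : lmodType K) (S : set M) : Prop :=
  forall (s : seq M) (c : M -> K), uniq s -> (forall x, x \in s -> S x) ->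
    \sum_(x <- s) c x *: x = 0 -> forall x, x \in s -> c x = 0.

Definition spanning (K : pzRingType) (M : lmodType K) (S : set M) : Prop :=
  forall v : M, exists (s : seq M) (c : M -> K),
    (forall x, x \in s -> S x) /\ v = \sum_(x <- s) c x *: x.

Definition is_basis (K : pzRingType) (M : lmodType K) (S : set M) : Prop :=
  lin_indep S /\ spanning S.

Definition uncountable_dim (K : pzRingType) (M : lmodType K) : Prop :=
  exists B : set M, is_basis B /\ ~ countable B.

(* Main.v *)
Require Import Defs.
From HB Require Import structures.
From mathcomp Require Import all_boot all_order all_algebra.
From mathcomp Require Import all_classical reals topology cantor archimedean zify lra.
Import Order.TTheory GRing.Theory Num.Theory.
Local Open Scope classical_set_scope.
Local Open Scope ring_scope.
Set Implicit Arguments. Unset Strict Implicit. Unset Printing Implicit Defensive.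

Fixpoint code (a : nat -> bool) (n : nat) : nat :=
  if n is n'.+1 then a n' + (code a n').*2 else 0.

Lemma code_lt a n : (code a n < 2 ^ n)%N.
Proof.
elim: n => [//|n IH] /=; rewrite expnS; case: (a n) => /=; lia.
Qed.

Lemma code_half a n : (code a n.+1)./2 = code a n.
Proof. by rewrite /= half_bit_double. Qed.

Lemma code_eq a b n : (forall i, (i < n)%N -> a i = b i) -> code a n = code b n.
Proof.
elim: n => [//|n IH] H /=; rewrite H // IH // => i iN; apply: H; exact: ltnW.
Qed.

Lemma code_inj a b n : code a n = code b n -> forall i, (i < n)%N -> a i = b i.
Proof.
elim: n => [//|n IH] /= E.
have E1 : code a n = code b n.
  by have := congr1 half E; rewrite !half_bit_double.
move=> i; rewrite ltnS leq_eqVlt => /orP [/eqP ->|iN]; last exact: IH.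
by move: E; rewrite E1 => /addIn; case: (a n); case: (b n).
Qed.

Lemma prefix_nbhs (a : cantor_space) n :
  nbhs a [set b : cantor_space | forall i, (i < n)%N -> b i = a i].
Proof.
elim: n => [|n IH]; first by apply: filterS filterT.
have Hn : nbhs a [set b : cantor_space | b n = a n].
  by apply: (@proj_continuous nat (fun _ => bool) n a [set a n]); exact: discrete_set1.
apply: filterS (filterI IH Hn) => b [H1 H2] i.
by rewrite ltnS leq_eqVlt => /orP [/eqP ->|iN]; [|apply: H1].
Qed.


Lemma in_uniq_inj (T U : eqType) (h : T -> U) (l : seq T) p p' :
  uniq (map h l) -> p \in l -> p' \in l -> h p = h p' -> p = p'.
Proof.
elim: l => // x l IH /= /andP [hx ul]; rewrite !inE.
move=> /orP [/eqP ->|pl] /orP [/eqP ->|p'l] E //.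
- by move: hx; rewrite E map_f.
- by move: hx; rewrite -E map_f.
- exact: IH.
Qed.

Lemma reindex (V : nmodType) N (hs : seq nat) (G : nat -> V) : uniq hs ->
  (forall j, j \in hs -> (j < N)%N) ->
  (forall j, (j < N)%N -> j \notin hs -> G j = 0) ->
  \sum_(0 <= j < N) G j = \sum_(j <- hs) G j.
Proof.
move=> uh hN G0; rewrite (bigID (fun j => j \in hs)) /=.
rewrite [X in _ + X]big1_seq ?addr0; last first.
  by move=> j /andP [jh]; rewrite mem_index_iota => /andP [_ jN]; apply: G0.
rewrite -big_filter; apply: perm_big; apply: uniq_perm => //.
  by apply: filter_uniq; rewrite /index_iota subn0 iota_uniq.
move=> j; rewrite mem_filter mem_index_iota; case jh: (j \in hs) => //=.
by rewrite hN.
Qed.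

Lemma fin_ex (T : eqType) (s : seq T) (Q : T -> nat -> Prop) :
  (forall x, x \in s -> exists n0, forall n, (n0 <= n)%N -> Q x n) ->
  exists n0, forall n, (n0 <= n)%N -> forall x, x \in s -> Q x n.
Proof.
elim: s => [|y s IH] H; first by exists 0%N.
have [n1 H1] := IH (fun x xs => H x (mem_behead (s := y :: s) xs)).
have [n2 H2] := H y (mem_head _ _).
exists (maxn n1 n2) => n; rewrite geq_max => /andP [h1 h2] x.
by rewrite inE => /orP [/eqP ->|xs]; [apply: H2 | apply: H1].
Qed.

Lemma codes_uniq (s : seq cantor_space) : uniq s ->
  exists n0, forall n, (n0 <= n)%N -> uniq [seq code a n | a <- s].
Proof.
elim: s => [|a s IH] /=; first by exists 0%N.
move=> /andP [ans us]; have [n1 H1] := IH us.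
have [n2 H2] : exists n0, forall n, (n0 <= n)%N -> forall b, b \in s ->
    code a n != code b n.
  apply: fin_ex => b bs.
  have [i ai] : exists i, a i != b i.
    case: (pselect (exists i, a i != b i)) => // H; exfalso.
    move: ans; rewrite (_ : a = b) ?bs //; apply: funext => i.
    by case: (pselect (a i = b i)) => // /eqP abi; exfalso; apply: H; exists i.
  exists i.+1 => n iN; apply/negP => /eqP /code_inj /(_ i iN) /eqP.
  exact/negP.
exists (maxn n1 n2) => n; rewrite geq_max => /andP [h1 h2].
rewrite H1 // andbT; apply/negP => /mapP [b bs E].
by move: (H2 n h2 b bs); rewrite E eqxx.
Qed.

Section Main.
Variables (R : realType) (K : topUnitRingType) (nrm : K -> R) (M : topLmodType K).
Hypothesis Kdiv : division_ring K.
Hypothesis nrm_ge0 : forall x, 0 <= nrm x.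
Hypothesis nrm_eq0 : forall a b, nrm (a - b) = 0 <-> a = b.
Hypothesis nrm_sym : forall a b, nrm (a - b) = nrm (b - a).
Hypothesis nrm_tri : forall a b c, nrm (a - c) <= nrm (a - b) + nrm (b - c).
Hypothesis Kprop : proper_norm nrm.
Hypothesis addC : continuous (fun p : M * M => p.1 + p.2).
Hypothesis oppC : continuous (fun x : M => - x).
Hypothesis sclC : continuous (fun p : K * M => p.1 *: p.2).
Variable d : M -> M -> R.
Hypothesis d_ge0 : forall x y, 0 <= d x y.
Hypothesis d_eq0 : forall x y, d x y = 0 <-> x = y.
Hypothesis d_sym : forall x y, d x y = d y x.
Hypothesis d_tri : forall x y z, d x z <= d x y + d y z.
Hypothesis dtop : metric_topology d.

Lemma dxx x : d x x = 0. Proof. by apply/d_eq0. Qed.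

Lemma nbhs_ball (x : M) e : 0 < e -> nbhs x [set y | d x y < e].
Proof. by move=> e0; apply/dtop; exists e. Qed.

Lemma cont_ball (T : topologicalType) (f : T -> M) (t : T) e :
  f @ t --> f t -> 0 < e -> nbhs t (f @^-1` [set y | d (f t) y < e]).
Proof. by move=> fc e0; apply: fc; apply: nbhs_ball. Qed.

Lemma cont_opp (b : M) e : 0 < e -> exists2 del, 0 < del &
  forall b', d b b' < del -> d (- b) (- b') < e.
Proof.
move=> e0; have /dtop [del del0 H] := @oppC b _ (nbhs_ball (- b) e0).
by exists del => // b' /H.
Qed.

Lemma cont_add (a b : M) e : 0 < e -> exists2 del, 0 < del &
  forall a' b', d a a' < del -> d b b' < del -> d (a + b) (a' + b') < e.
Proof.
move=> e0; have := @addC (a, b) _ (nbhs_ball (a + b) e0).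
move=> [[U V] /= [/dtop [e1 e10 HU] /dtop [e2 e20 HV]] HUV].
exists (Num.min e1 e2); first by rewrite lt_min e10 e20.
move=> a' b' ha hb; apply: (HUV (a', b')); split.
  by apply: HU; apply: lt_le_trans ha _; rewrite ge_min lexx.
by apply: HV; apply: lt_le_trans hb _; rewrite ge_min lexx orbT.
Qed.

Lemma cont_sub (a b : M) e : 0 < e -> exists2 del, 0 < del &
  forall a' b', d a a' < del -> d b b' < del -> d (a - b) (a' - b') < e.
Proof.
move=> e0; have [e1 e10 H1] := cont_add a (- b) e0.
have [e2 e20 H2] := cont_opp b e10.
exists (Num.min e1 e2); first by rewrite lt_min e10 e20.
move=> a' b' ha hb; apply: H1.
  by apply: lt_le_trans ha _; rewrite ge_min lexx.
by apply: H2; apply: lt_le_trans hb _; rewrite ge_min lexx orbT.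
Qed.

Lemma cont_scl (c : K) (x : M) e : 0 < e -> exists U, nbhs c U /\
  exists2 del, 0 < del & forall c' y, U c' -> d x y < del -> d (c *: x) (c' *: y) < e.
Proof.
move=> e0; have := @sclC (c, x) _ (nbhs_ball (c *: x) e0).
move=> [[U V] /= [HU /dtop [e2 e20 HV]] HUV].
exists U; split => //; exists e2 => // c' y Uc' hy.
by apply: (HUV (c', y)); split => //; apply: HV.
Qed.


Lemma min3_le1 (a b c : R) : Num.min a (Num.min b c) <= a.
Proof. by rewrite ge_min lexx. Qed.
Lemma min3_le2 (a b c : R) : Num.min a (Num.min b c) <= b.
Proof. by rewrite !ge_min lexx orbT. Qed.
Lemma min3_le3 (a b c : R) : Num.min a (Num.min b c) <= c.
Proof. by rewrite !ge_min lexx !orbT. Qed.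
Lemma min3_gt0 (a b c : R) : 0 < a -> 0 < b -> 0 < c -> 0 < Num.min a (Num.min b c).
Proof. by move=> a0 b0 c0; rewrite !lt_min a0 b0 c0. Qed.

Lemma robust (C : nat -> set K) (HC : forall j, compact (C j)) N :
  forall (p : nat -> M) z0,
  ~ (exists c : nat -> K, (forall j, (j < N)%N -> C j (c j)) /\
       z0 = \sum_(0 <= j < N) c j *: p j) ->
  exists2 r, 0 < r & forall q z, (forall j, (j < N)%N -> d (p j) (q j) < r) ->
    d z0 z < r ->
    ~ (exists c : nat -> K, (forall j, (j < N)%N -> C j (c j)) /\
       z = \sum_(0 <= j < N) c j *: q j).
Proof.
elim: N => [|N IH] p z0 Hn.
  have z00 : z0 <> 0.
    by move=> z0E; apply: Hn; exists (fun _ => 0); split => //; rewrite big_geq.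
  exists (d z0 0).
    rewrite lt_neqAle d_ge0 andbT; apply/eqP => /esym /d_eq0; exact: z00.
  move=> q z _ hz [c [_ zE]]; rewrite big_geq // in zE.
  by rewrite zE ltxx in hz.
pose Fs := filter_from [set r : R | 0 < r] (fun r => [set i : (nat -> M) * M |
   (forall j, (j < N.+1)%N -> d (p j) (i.1 j) < r) /\ d z0 i.2 < r]).
have FF : Filter Fs.
  apply: filter_from_filter; first by exists 1 => //=; rewrite ltr01.
  move=> r1 r2 r10 r20; exists (Num.min r1 r2) => /=; first by rewrite lt_min r10 r20.
  move=> [q z] /= [Hq Hz]; split; split.
  - by move=> j jN; apply: lt_le_trans (Hq j jN) _; rewrite ge_min lexx.
  - by apply: lt_le_trans Hz _; rewrite ge_min lexx.
  - by move=> j jN; apply: lt_le_trans (Hq j jN) _; rewrite ge_min lexx orbT.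
  - by apply: lt_le_trans Hz _; rewrite ge_min lexx orbT.
pose P := fun (i : (nat -> M) * M) (c : K) => ~ (exists c' : nat -> K,
   (forall j, (j < N)%N -> C j (c' j)) /\
   i.2 - c *: i.1 N = \sum_(0 <= j < N) c' j *: i.1 j).
have cov : forall c, C N c -> \forall c' \near c & i \near Fs, P i c'.
  move=> c Cc.
  have Hn' : ~ (exists c' : nat -> K, (forall j, (j < N)%N -> C j (c' j)) /\
      z0 - c *: p N = \sum_(0 <= j < N) c' j *: p j).
    move=> [c' [Hc' E]]; apply: Hn; exists (fun j => if j == N then c else c' j); split.
      move=> j; rewrite ltnS leq_eqVlt => /orP [/eqP -> | jN]; first by rewrite eqxx.
      by rewrite (ltn_eqF jN); apply: Hc'.
    rewrite big_nat_recr //= eqxx.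
    rewrite (@eq_big_nat _ _ _ 0 N _ (fun j => c' j *: p j)); last first.
      by move=> j /andP [_ jN]; rewrite (ltn_eqF jN).
    by rewrite -E subrK.
  have [r r0 Hr] := IH p _ Hn'.
  have [del2 del20 H2] := cont_sub z0 (c *: p N) r0.
  have [U [HU [del1 del10 H1]]] := cont_scl c (p N) del20.
  pose m := Num.min r (Num.min del1 del2).
  have m0 : 0 < m by apply: min3_gt0.
  exists (U, [set i : (nat -> M) * M | (forall j, (j < N.+1)%N -> d (p j) (i.1 j) < m)
     /\ d z0 i.2 < m]).
    by split => //=; exists m.
  move=> [c' [q z]] /= [Uc' [Hq Hz]].
  apply: (Hr q (z - c' *: q N)).
  - move=> j jN; apply: lt_le_trans (Hq j (ltnW jN)) _; exact: min3_le1.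
  - apply: H2; first by apply: lt_le_trans Hz _; exact: min3_le3.
    apply: H1 => //; apply: lt_le_trans (Hq N (ltnSn N)) _; exact: min3_le2.
have := (compact_near_coveringP (C N)).1 (HC N) _ Fs P FF cov.
move=> [r r0 Hr]; exists r => // q z Hq Hz [c [Hc E]].
apply: (Hr (q, z) (conj Hq Hz) (c N) (Hc N (ltnSn N))).
exists c; split => [j jN|]; first by apply: Hc; apply: ltnW.
by rewrite /= E big_nat_recr //= addrK.
Qed.


Lemma sum_pick (V : nmodType) (T : eqType) (s : seq T) (b : T) (G : T -> V) :
  uniq s -> b \in s -> \sum_(x <- s) (if x == b then G x else 0) = G b.
Proof.
move=> us bs; rewrite (bigD1_seq b) //= eqxx big1 ?addr0 // => x /negbTE ->.
by [].
Qed.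

Variable B : set M.
Hypothesis Bind : lin_indep B.
Hypothesis Bspan : spanning B.
Hypothesis Bunc : ~ countable B.

Lemma combine (S : set M) (SB : S `<=` B) (b : M) (Bb : B b) (nSb : ~ S b)
  (l : seq (K * M)) : (forall p, p \in l -> S p.2) ->
  b <> \sum_(p <- l) p.1 *: p.2.
Proof.
move=> Hl bE.
pose s := undup (b :: map snd l).
pose ce := fun x => \sum_(p <- l | p.2 == x) p.1 - (if x == b then 1 else 0).
have us : uniq s by apply: undup_uniq.
have bs : b \in s by rewrite mem_undup inE eqxx.
have ls : forall p, p \in l -> p.2 \in s.
  by move=> p pl; rewrite mem_undup inE; apply/orP; right; apply: map_f.
have sB : forall x, x \in s -> B x.
  move=> x; rewrite mem_undup inE => /orP [/eqP -> //|/mapP [p pl ->]].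
  by apply: SB; apply: Hl.
have sum0 : \sum_(x <- s) ce x *: x = 0.
  rewrite /ce.
  under eq_bigr do rewrite scalerBl.
  rewrite sumrB.
  have -> : \sum_(x <- s) (if x == b then 1 else 0) *: x = b.
    rewrite -[RHS](sum_pick (fun x => x) us bs); apply: eq_bigr => x _.
    by case: (x == b); rewrite ?scale1r ?scale0r.
  have -> : \sum_(x <- s) (\sum_(p <- l | p.2 == x) p.1) *: x =
            \sum_(p <- l) p.1 *: p.2.
    have E1 : forall x, (\sum_(p <- l | p.2 == x) p.1) *: x =
        \sum_(p <- l) (if x == p.2 then p.1 *: x else 0).
      by move=> x; rewrite scaler_suml big_mkcond /=; apply: eq_bigr => p _;
        rewrite eq_sym.
    under eq_bigr do rewrite E1.
    rewrite exchange_big /= [RHS]big_seq big_seq; apply: eq_bigr => p pl.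
    by rewrite (sum_pick (fun x => p.1 *: x)) // ls.
  by rewrite -bE subrr.
have := Bind us sB sum0 bs.
rewrite /ce eqxx big1_seq ?sub0r; last first.
  move=> p /andP [/eqP pb pl]; exfalso; apply: nSb; rewrite -pb; exact: Hl.
by move/eqP; rewrite oppr_eq0 oner_eq0.
Qed.


Lemma countU (T : Type) (A A2 : set T) : countable A -> countable A2 ->
  countable (A `|` A2).
Proof.
move=> cA cB.
have -> : A `|` A2 = \bigcup_(b in [set: bool]) (if b then A else A2).
  apply/seteqP; split => x.
    by case => [Ax|Bx]; [exists true | exists false].
  by case=> [] [] _ /= H; [left|right].
apply: bigcup_countable; first exact: countableP.
by case.
Qed.

Variable D : set M.
Hypothesis Dcnt : countable D.
Hypothesis Ddense : closure D = setT.

Lemma avoid N (q : nat -> M) (x : M) e : 0 < e -> exists y, d x y < e /\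
  ~ (exists c : nat -> K, y = \sum_(0 <= j < N) c j *: q j).
Proof.
move=> e0.
case: (pselect (exists y, d x y < e /\
  ~ (exists c : nat -> K, y = \sum_(0 <= j < N) c j *: q j))) => // Hno; exfalso.
pose W := fun y => exists c : nat -> K, y = \sum_(0 <= j < N) c j *: q j.
have Hball : forall y, d x y < e -> W y.
  move=> y hy; case: (pselect (W y)) => // nW; exfalso; apply: Hno; by exists y.
have WB : forall a b, W a -> W b -> W (a - b).
  move=> a b [ca ->] [cb ->]; exists (fun j => ca j - cb j).
  by rewrite -sumrB; apply: eq_bigr => j _; rewrite scalerBl.
have W0 : W 0 by exists (fun _ => 0); rewrite big1 // => j _; rewrite scale0r.
have Wx : W x by apply: Hball; rewrite dxx.
have Wopen : forall w, W w -> exists2 del, 0 < del & forall y, d w y < del -> W y.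
  move=> w Ww; have [del del0 H] := cont_add w (x - w) e0.
  exists del => // y hy.
  have := H y (x - w) hy; rewrite dxx => /(_ del0).
  rewrite (addrC w) subrK => hx.
  by have := WB _ _ (Hball _ hx) (WB _ _ Wx Ww); rewrite addrK.
have cosets : forall v, exists2 q0, D q0 & W (v - q0).
  move=> v; have [e1 e10 H0] := Wopen 0 W0.
  have [del del0 H] := cont_sub v v e10.
  have : closure D v by rewrite Ddense.
  move=> /(_ [set y | d v y < del] (nbhs_ball v del0)) [q0 [Dq0 hq0]].
  exists q0 => //; apply: H0; have := H v q0; rewrite dxx subrr.
  by move=> /(_ del0 hq0).
have : forall v, exists sc : seq M * (M -> K),
    (forall x, x \in sc.1 -> B x) /\ v = \sum_(x <- sc.1) sc.2 x *: x.
  by move=> v; have [s [c H]] := Bspan v; exists (s, c).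
move=> /choice [sp Hsp].
pose E := D `|` [set v | exists2 j, (j < N)%N & v = q j].
pose B' := \bigcup_(v in E) [set` (sp v).1].
have cB' : countable B'.
  apply: bigcup_countable => [|v _]; last exact/finite_set_countable/finite_seq.
  apply: countU => //; apply: (@sub_countable _ _ _ [set` map q (iota 0 N)]).
    apply: subset_card_le => v [j jN ->] /=; apply: map_f.
    by rewrite mem_iota leq0n add0n.
  exact/finite_set_countable/finite_seq.
have B'B : B' `<=` B by move=> y [v _ /= yin]; exact: (Hsp v).1 y yin.
have [b [Bb nb]] : exists b, B b /\ ~ B' b.
  case: (pselect (exists b, B b /\ ~ B' b)) => // Hn; exfalso; apply: Bunc.
  apply: (sub_countable _ cB'); apply: subset_card_le => b Bb.
  by case: (pselect (B' b)) => // nb; exfalso; apply: Hn; exists b.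
pose SP := fun v => exists l : seq (K * M), (forall p, p \in l -> B' p.2) /\
   v = \sum_(p <- l) p.1 *: p.2.
have SP0 : SP 0 by exists [::]; rewrite big_nil.
have SPD : forall a b, SP a -> SP b -> SP (a + b).
  move=> a b' [la [Ha ->]] [lb [Hb ->]]; exists (la ++ lb); split; last by rewrite big_cat.
  by move=> p; rewrite mem_cat => /orP [/Ha|/Hb].
have SPZ : forall (k : K) a, SP a -> SP (k *: a).
  move=> k a [la [Ha ->]]; exists (map (fun p => (k * p.1, p.2)) la); split.
    by move=> p /mapP [p' p'l ->] /=; apply: Ha.
  by rewrite big_map scaler_sumr; apply: eq_bigr => p _; rewrite scalerA.
have SPE : forall v, E v -> SP v.
  move=> v Ev; exists (map (fun x => ((sp v).2 x, x)) (sp v).1); split.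
    by move=> p /mapP [y yin ->] /=; exists v.
  by rewrite big_map; exact: (Hsp v).2.
have [q0 Dq0 [c Hc]] := cosets b.
have : SP b.
  rewrite -(subrK q0 b) Hc; apply: (SPD); last by apply: SPE; left.
  rewrite big_nat; apply: big_ind => //.
  move=> j /andP [_ jN]; apply: SPZ; apply: SPE; right; by exists j.
move=> [l [Hl bE]].
exact: (combine B'B Bb nb Hl bE).
Qed.


Definition IndF N (p : nat -> M) := forall c : nat -> K,
  \sum_(0 <= j < N) c j *: p j = 0 -> forall j, (j < N)%N -> c j = 0.

Lemma seqpts (P0 : nat -> M) del : 0 < del -> forall m, exists q : nat -> M,
  (forall j, (j < m)%N -> d (P0 j) (q j) < del) /\ IndF m q.
Proof.
move=> del0; elim=> [|m [q [Hq Hi]]].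
  by exists P0; split => // c _ j.
have [y [hy ny]] := avoid m q (P0 m) del0.
pose q' := fun j => if j == m then y else q j.
have Sq : forall c : nat -> K, \sum_(0 <= j < m) c j *: q' j = \sum_(0 <= j < m) c j *: q j.
  by move=> c; apply: eq_big_nat => j /andP [_ jm]; rewrite /q' (ltn_eqF jm).
exists q'; split.
  move=> j; rewrite ltnS leq_eqVlt => /orP [/eqP ->|jm]; first by rewrite /q' eqxx.
  by rewrite /q' (ltn_eqF jm); apply: Hq.
move=> c; rewrite big_nat_recr //= Sq {1}/q' eqxx => E.
have cm0 : c m = 0.
  case: (pselect (c m = 0)) => // /eqP cmn; exfalso; apply: ny.
  have cmU : c m \is a GRing.unit by apply: Kdiv.
  exists (fun j => - ((c m)^-1 * c j)).
  have E2 : c m *: y = - \sum_(0 <= j < m) c j *: q j.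
    by apply/eqP; rewrite -addr_eq0 addrC E.
  rewrite -[y]scale1r -(mulVr cmU) -scalerA E2 scalerN scaler_sumr -sumrN.
  by apply: eq_bigr => j _; rewrite scalerA scaleNr.
move: E; rewrite cm0 scale0r addr0 => E j.
rewrite ltnS leq_eqVlt => /orP [/eqP ->|jm] //.
exact: Hi E j jm.
Qed.


Definition Cset (k : R) (i0 j : nat) : set K :=
  if j == i0 then [set -1] else [set c | nrm (0 - c) <= k].

Lemma Cset_compact k i0 j : compact (Cset k i0 j).
Proof. rewrite /Cset; case: ifP => _; [exact: compact_set1 | exact: Kprop]. Qed.

Definition Inv (n : nat) (X : nat -> M) (r : R) := forall q : nat -> M,
  (forall j, (j < 2 ^ n)%N -> d (X j) (q j) < r) -> forall i0, (i0 < 2 ^ n)%N ->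
  ~ (exists c : nat -> K, (forall j, (j < 2 ^ n)%N -> Cset n%:R i0 j (c j)) /\
      0 = \sum_(0 <= j < 2 ^ n) c j *: q j).

Lemma finmin N (P : nat -> R -> Prop) :
  (forall i r r', P i r -> 0 < r' -> r' <= r -> P i r') ->
  (forall i, (i < N)%N -> exists2 r, 0 < r & P i r) ->
  exists2 r, 0 < r & forall i, (i < N)%N -> P i r.
Proof.
move=> Pm; elim: N => [|N IH] H; first by exists 1 => //; rewrite ltr01.
have [r1 r10 H1] := IH (fun i iN => H i (ltnW iN)).
have [r2 r20 H2] := H N (ltnSn N).
exists (Num.min r1 r2); first by rewrite lt_min r10 r20.
move=> i; rewrite ltnS leq_eqVlt => /orP [/eqP ->|iN].
  by apply: Pm H2 _ _; rewrite ?lt_min ?r10 ?r20 // ge_min lexx orbT.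
by apply: Pm (H1 i iN) _ _; rewrite ?lt_min ?r10 ?r20 // ge_min lexx.
Qed.

Lemma step n (X : nat -> M) (r : R) : 0 < r -> exists Y : nat -> M, exists r' : R,
  [/\ 0 < r', r' <= r / 2,
      (forall j, (j < 2 ^ n.+1)%N -> d (X j./2) (Y j) < r / 4) & Inv n.+1 Y r'].
Proof.
move=> r0.
have r40 : 0 < r / 4 by rewrite divr_gt0 // ltr0n.
have [Y [HY HI]] := seqpts (fun j => X j./2) r40 (2 ^ n.+1).
pose P := fun i0 r => forall q : nat -> M,
  (forall j, (j < 2 ^ n.+1)%N -> d (Y j) (q j) < r) ->
  ~ (exists c : nat -> K, (forall j, (j < 2 ^ n.+1)%N -> Cset n.+1%:R i0 j (c j)) /\
      0 = \sum_(0 <= j < 2 ^ n.+1) c j *: q j).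
have [rm rm0 Hrm] : exists2 r, 0 < r & forall i, (i < 2 ^ n.+1)%N -> P i r.
  apply: finmin.
    move=> i r1 r2 H r20 r21 q Hq; apply: H => j jN.
    exact: lt_le_trans (Hq j jN) r21.
  move=> i0 i0N.
  have [|r1 r10 H1] := @robust _ (@Cset_compact n.+1%:R i0) (2 ^ n.+1) Y 0.
    move=> [c [Hc E]].
    have := HI c (esym E) i0 i0N.
    have := Hc i0 i0N; rewrite /Cset eqxx /= => ->.
    by move/eqP; rewrite oppr_eq0 oner_eq0.
  exists r1 => // q Hq; apply: H1 => //; by rewrite dxx.
exists Y, (Num.min (r / 2) rm); split.
- by rewrite lt_min rm0 divr_gt0 // ltr0n.
- by rewrite ge_min lexx.
- by [].
- move=> q Hq i0 i0N; apply: (Hrm i0 i0N) => j jN.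
  by apply: lt_le_trans (Hq j jN) _; rewrite ge_min lexx orbT.
Qed.


Hypothesis dcomp : forall u : nat -> M,
  (forall e : R, 0 < e -> exists N : nat,
     forall m n, (N <= m)%N -> (N <= n)%N -> d (u m) (u n) < e) ->
  exists l : M, u @ \oo --> l.

Lemma lim_le (u : nat -> M) (l x : M) s n : u @ \oo --> l ->
  (forall m, (n <= m)%N -> d x (u m) <= s) -> d x l <= s.
Proof.
move=> ul H; rewrite leNgt; apply/negP => hs.
have e0 : 0 < d x l - s by rewrite subr_gt0.
have [N _ HN] := ul _ (nbhs_ball l e0).
have := HN (maxn N n) (leq_maxl _ _); rewrite /= => h1.
have := H (maxn N n) (leq_maxr _ _) => h2.
have := d_tri x (u (maxn N n)) l; rewrite (d_sym (u _) l).
lra.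
Qed.

Section Tree.
Variables (X : nat -> nat -> M) (r : nat -> R).
Hypothesis r0 : forall n, 0 < r n.
Hypothesis rhalf : forall n, r n.+1 <= r n / 2.
Hypothesis link : forall n j, (j < 2 ^ n.+1)%N -> d (X n j./2) (X n.+1 j) < r n / 4.
Hypothesis inv : forall n, Inv n.+1 (X n.+1) (r n.+1).

Definition pth (a : cantor_space) n := X n (code a n).

Lemma pth_link a n : d (pth a n) (pth a n.+1) < r n / 4.
Proof. by rewrite /pth -[code a n](code_half a n); apply: link; apply: code_lt. Qed.

Lemma pth_bound a n m : d (pth a n) (pth a (n + m)) <= r n / 2 - r (n + m) / 2.
Proof.
elim: m => [|m IH]; first by rewrite addn0 dxx subrr.
rewrite addnS.
have := d_tri (pth a n) (pth a (n + m)) (pth a (n + m).+1).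
have := pth_link a (n + m); have := rhalf (n + m).
lra.
Qed.

Lemma r_small e : 0 < e -> exists n, r n < e.
Proof.
move=> e0.
have H : forall n, r n * (2 ^ n)%:R <= r 0%N.
  elim=> [|n IH]; first by rewrite expn0 mulr1.
  apply: le_trans IH; rewrite expnS natrM mulrA.
  apply: ler_wpM2r; first exact: ler0n.
  have := rhalf n; lra.
have b0 : 0 <= r 0%N / e by rewrite divr_ge0 // ltW.
pose n := Num.Def.archi_bound (r 0%N / e).
have hn : r 0%N / e < n%:R by apply: archi_boundP.
exists n.
have h2 : n%:R <= (2 ^ n)%:R :> R by rewrite ler_nat; apply: ltnW; apply: ltn_expl.
have h3 : r 0%N < e * n%:R by rewrite -ltr_pdivrMl // mulrC.
have := H n; have := r0 n.
set N := n%:R in h2 h3 *; set P := (2 ^ n)%:R in h2 *.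
nra.
Qed.

Lemma pth_cvg a : exists l : M, pth a @ \oo --> (l : M).
Proof.
apply: dcomp => e e0; have [n hn] := r_small e0.
exists n => m m' hm hm'.
have := d_tri (pth a m) (pth a n) (pth a m'); rewrite (d_sym (pth a m) (pth a n)).
have := pth_bound a n (m - n); rewrite subnKC //.
have := pth_bound a n (m' - n); rewrite subnKC //.
have := r0 m; have := r0 m'.
lra.
Qed.

Variable f : cantor_space -> M.
Hypothesis fP : forall a, pth a @ \oo --> f a.

Lemma f_bound a n : d (pth a n) (f a) <= r n / 2.
Proof.
apply: (lim_le (n := n) (@fP a)) => m nm.
rewrite -(subnKC nm); have := pth_bound a n (m - n); have := r0 (n + (m - n)).
lra.
Qed.

Lemma f_close a b n : (forall i, (i < n)%N -> a i = b i) -> d (f a) (f b) <= r n.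
Proof.
move=> H; have E : pth a n = pth b n by rewrite /pth (code_eq H).
have := d_tri (f a) (pth a n) (f b); rewrite (d_sym (f a) (pth a n)) E.
have := f_bound a n; have := f_bound b n; rewrite E.
lra.
Qed.


Lemma key (l : seq (K * cantor_space)) (p0 : K * cantor_space) :
  uniq (map snd (p0 :: l)) -> p0.1 = -1 ->
  \sum_(p <- p0 :: l) p.1 *: f p.2 = 0 -> False.
Proof.
set L := p0 :: l => uL p01 sum0.
have [n0 Hn0] := codes_uniq uL.
pose k0 := \sum_(p <- L) nrm (0 - p.1).
have k00 : 0 <= k0 by apply: sumr_ge0 => p _.
have k0b : forall p, p \in L -> nrm (0 - p.1) <= k0.
  move=> p pL; rewrite /k0 (perm_big _ (perm_to_rem pL)) big_cons lerDl.
  by apply: sumr_ge0 => p' _.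
pose n' := maxn n0 (Num.Def.archi_bound k0).
pose n := n'.+1.
have kn : k0 < n%:R.
  apply: lt_le_trans (archi_boundP k00) _; rewrite ler_nat.
  by apply: leq_trans (leq_maxr n0 _) _; apply: leqnSn.
have un : uniq [seq code p.2 n | p <- L].
  have := Hn0 n (leq_trans (leq_maxl _ _) (leqnSn _)).
  by rewrite -map_comp.
pose idx j := find (fun p : K * cantor_space => code p.2 n == j) L.
pose q j := if (idx j < size L)%N then f (nth p0 L (idx j)).2 else X n j.
pose cc j := if (idx j < size L)%N then (nth p0 L (idx j)).1 else 0.
have hasf : forall j, (idx j < size L)%N -> code (nth p0 L (idx j)).2 n = j.
  by move=> j; rewrite -has_find => /(nth_find p0) /eqP.
have idxL : forall p, p \in L ->
    nth p0 L (idx (code p.2 n)) = p /\ (idx (code p.2 n) < size L)%N.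
  move=> p pL.
  have hs : has (fun p' : K * cantor_space => code p'.2 n == code p.2 n) L.
    by apply/hasP; exists p.
  have il : (idx (code p.2 n) < size L)%N by rewrite -has_find.
  split => //.
  apply: (in_uniq_inj (h := fun p : K * cantor_space => code p.2 n) un) => //.
    exact: mem_nth.
  exact: hasf.
have idx0 : idx (code p0.2 n) = 0%N by rewrite /idx /= eqxx.
apply: (inv (n := n') (q := q)) (code_lt p0.2 n) _.
  move=> j jN; rewrite /q; case: ifP => hj; last by rewrite dxx.
  have := f_bound (nth p0 L (idx j)).2 n; rewrite /pth hasf //.
  have := r0 n; lra.
exists cc; split.
  move=> j jN; rewrite /Cset; case: ifP => [/eqP ->|_].
    by rewrite /cc idx0 /= p01.
  rewrite /cc; case: ifP => hj /=.
    by apply: le_trans (k0b _ (mem_nth _ hj)) (ltW kn).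
  by have /nrm_eq0 -> : (0 : K) = 0 by []; apply: ler0n.
rewrite (@reindex _ _ [seq code p.2 n | p <- L]) //.
- rewrite big_map; apply/esym; rewrite -[RHS]sum0 big_seq [RHS]big_seq; apply: eq_bigr => p pL.
  by have [E il] := idxL p pL; rewrite /cc /q il E.
- by move=> j /mapP [p _ ->]; apply: code_lt.
- move=> j jN jn; rewrite /cc; case: ifP => hj; last by rewrite scale0r.
  exfalso; move/negP: jn; apply; apply/mapP; exists (nth p0 L (idx j)); [exact: mem_nth | exact: (esym (hasf j hj))].
Qed.


Lemma f_inj a b : a != b -> f a != f b.
Proof.
move=> ab; apply/eqP => E.
apply: (@key [:: (1, b)] (-1, a)) => //=.
  by rewrite inE ab.
by rewrite big_cons big_seq1 /= E scaleN1r scale1r addNr.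
Qed.

Definition Pset := [set f x | x in [set: cantor_space]].

Lemma f_indep : lin_indep Pset.
Proof.
move=> s c us sP sum0 x0 x0s.
case: (pselect (c x0 = 0)) => // /eqP cx0; exfalso.
have : forall x, exists a : cantor_space, Pset x -> f a = x.
  move=> x; case: (pselect (Pset x)) => [[a _ <-]|nP]; first by exists a.
  by exists (fun _ => false).
move=> /choice [g Hg].
have Hgs : forall x, x \in s -> f (g x) = x by move=> x xs; apply: Hg; apply: sP.
have ul : uniq (x0 :: rem x0 s) by rewrite -(perm_uniq (perm_to_rem x0s)).
have ms : forall x, x \in x0 :: rem x0 s -> x \in s.
  by move=> x; rewrite -(perm_mem (perm_to_rem x0s)).
have cU : c x0 \is a GRing.unit by apply: Kdiv.
pose l := map (fun x => (- ((c x0)^-1 * c x), g x)) (rem x0 s).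
apply: (@key l (- ((c x0)^-1 * c x0), g x0)).
- rewrite (_ : map snd _ = map g (x0 :: rem x0 s)); last by rewrite /= -map_comp.
  rewrite map_inj_in_uniq // => x y xs ys E.
  by rewrite -(Hgs x (ms _ xs)) -(Hgs y (ms _ ys)) E.
- by rewrite /= mulVr.
- have -> : \sum_(p <- (- ((c x0)^-1 * c x0), g x0) :: l) p.1 *: f p.2 =
      \sum_(x <- x0 :: rem x0 s) (- ((c x0)^-1 * c x)) *: f (g x).
    by rewrite !big_cons big_map.
  rewrite -(perm_big _ (perm_to_rem x0s)) big_seq.
  rewrite (eq_bigr (fun x => (- (c x0)^-1) *: (c x *: x))); last first.
    by move=> x xs; rewrite Hgs // scalerA mulNr.
  by rewrite -scaler_sumr -big_seq sum0 scaler0.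
Qed.

Lemma f_cont : continuous f.
Proof.
move=> a U /dtop [e e0 HU]; have [n hn] := r_small e0.
apply: filterS (prefix_nbhs a n) => b Hb; apply: HU.
have := @f_close a b n (fun i iN => esym (Hb i iN)).
by move=> h; apply: le_lt_trans h hn.
Qed.


Lemma M_hausdorff : hausdorff_space M.
Proof.
move=> p q cl; case: (pselect (p = q)) => // npq; exfalso.
have dpq : 0 < d p q.
  by rewrite lt_neqAle d_ge0 andbT; apply/eqP => /esym /d_eq0.
have e0 : 0 < d p q / 2 by rewrite divr_gt0 // ltr0n.
have [y [h1 h2]] := cl _ _ (nbhs_ball p e0) (nbhs_ball q e0).
have := d_tri p y q; rewrite (d_sym y q) /=.
move: h1 h2 => /= h1 h2.
lra.
Qed.

Lemma tree_perfect : exists P : set M, [/\ P !=set0, perfect_set P & lin_indep P].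
Proof.
have cP : closed Pset.
  apply: compact_closed; first exact: M_hausdorff.
  apply: continuous_compact; last exact: cantor_space_compact.
  exact: continuous_subspaceT f_cont.
exists Pset; split.
- by exists (f (fun _ => false)); exists (fun _ => false).
- split => //; apply/seteqP; split.
    move=> x Lx; rewrite ((closure_id Pset).1 cP) closure_isolated_limit_point.
    by right.
  move=> _ [a _ <-] U /dtop [e e0 HU]; have [n hn] := r_small e0.
  pose b : cantor_space := fun i => if i == n then ~~ a i else a i.
  exists (f b); split.
  + apply: f_inj; apply/eqP => E; have := congr1 (fun g => g n) E.
    by rewrite /b /= eqxx; case: (a n).
  + by exists b.
  + apply: HU; apply: le_lt_trans hn; apply: f_close => i iN.
    by rewrite /b (ltn_eqF iN).
- exact: f_indep.
Qed.

End Tree.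


Lemma main_exists : exists P : set M, [/\ P !=set0, perfect_set P & lin_indep P].
Proof.
have : forall p : nat * ((nat -> M) * R), exists q : (nat -> M) * R,
    0 < p.2.2 -> [/\ 0 < q.2, q.2 <= p.2.2 / 2,
      (forall j, (j < 2 ^ p.1.+1)%N -> d (p.2.1 j./2) (q.1 j) < p.2.2 / 4)
      & Inv p.1.+1 q.1 q.2].
  move=> [n [Y r]] /=; case: (pselect (0 < r)) => r0; last by exists (Y, r).
  by have [Y' [r' H]] := step n Y r0; exists (Y', r').
move=> /choice [stp Hstp].
pose st := fix st n := if n is n'.+1 then stp (n', st n')
  else ((fun _ => 0) : nat -> M, 1 : R).
pose X n := (st n).1; pose r n := (st n).2.
have r0 : forall n, 0 < r n.
  elim => [|n IH]; first by rewrite /r /= ltr01.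
  by have [] := Hstp (n, st n) IH.
have H : forall n, [/\ 0 < r n.+1, r n.+1 <= r n / 2,
      (forall j, (j < 2 ^ n.+1)%N -> d (X n j./2) (X n.+1 j) < r n / 4)
      & Inv n.+1 (X n.+1) (r n.+1)].
  by move=> n; apply: (Hstp (n, st n) (r0 n)).
have rhalf : forall n, r n.+1 <= r n / 2 by move=> n; case: (H n).
have link : forall n j, (j < 2 ^ n.+1)%N -> d (X n j./2) (X n.+1 j) < r n / 4.
  by move=> n; case: (H n).
have inv : forall n, Inv n.+1 (X n.+1) (r n.+1) by move=> n; case: (H n).
have /choice [f fP] := pth_cvg r0 rhalf link.
exact: (tree_perfect r0 rhalf link inv fP).
Qed.

End Main.

Unset Implicit Arguments.
Set Strict Implicit.

Theorem corollary5p2 (R : realType) (K : topUnitRingType) (nrm : K -> R)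
  (M : topLmodType K) :
  proper_normed_division_ring nrm ->
  topological_module M ->
  polish_space R M ->
  uncountable_dim M ->
  exists P : set M, [/\ P !=set0, perfect_set P & lin_indep P].
Proof.
move=> [Kdiv [nge0 neq0 nsym ntri nmul] _ Kprop] [addC oppC sclC].
move=> [[D [Dc Dd]] [d [[dge0 deq0 dsym dtri] dtop dcomp]]] [B [[Bi Bs] Bu]].

exact: (main_exists Kdiv nge0 neq0 Kprop addC oppC sclC dge0 deq0 dsym dtri dtop Bi Bs Bu Dc Dd dcomp).
Qed.
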